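(* Let $n\ge2$, $F(a)=\sum_{k=0}^nA_ka^k$ with $A_n=1$, let $x(a)$ be smooth, and set $b_k=\sum_{s=1}^k\frac{F^{(k-s)}}{(k-s)!}\frac{D_a^sx}{(1/2)_s}$ for $k=1,\dots,n$. With $H=\Pi^2+aP_y^2$ one has the identity $$\sum_{k=1}^n b_k\,\Pi^{2k-1}P_y^{2(n-k)+1}=\sum_{k=1}^n\tilde b_k\,H^{n-k}\,\Pi\,P_y^{2k-1},\qquad \tilde b_k=\sum_{s=1}^k\binom{n-s}{k-s}(-a)^{k-s}\,b_{n-s+1}.$$ If moreover $F=\prod_{i=1}^n(a-a_i)$ with distinct real $a_i$ and $x=\sum_{i=1}^n\xi_i\Delta_i^{-1/2}$ with $\Delta_i=\epsilon_i(a-a_i)>0$, $\epsilon_i\in\{\pm1\}$, $\xi_i\in\mathbb{R}$, then for all $k\in\{1,\dots,n\}$ $$\tilde b_k=(-1)^k\sum_{i=1}^n\frac{\xi_i}{\sqrt{\Delta_i}}\,\sigma^i_{k-1}.$$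
   Context: $D_a=d/da$, $F^{(m)}=D_a^mF$; Pochhammer $(z)_0=1$, $(z)_s=z(z+1)\cdots(z+s-1)$. For each $i$, the numbers $\sigma^i_m$ ($-1\le m\le n$) are defined by $\prod_{l\neq i}(a-a_l)=\sum_{m=0}^{n-1}(-1)^m\sigma^i_ma^{n-1-m}$ together with $\sigma^i_{-1}=\sigma^i_n=0$. *)

(* Defs.v *)
From Stdlib Require Import Reals Lra.
From Coquelicot Require Export Coquelicot.
Open Scope R_scope.
Definition Rbinomial (n k : nat) : R := Stdlib.Reals.Binomial.C n k.

Fixpoint sumR (n : nat) (f : nat -> R) : R :=
  match n with O => 0 | S m => sumR m f + f m end.

Fixpoint prodR (n : nat) (f : nat -> R) : R :=
  match n with O => 1 | S m => prodR m f * f m end.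

Fixpoint poch (z : R) (s : nat) : R :=
  match s with O => 1 | S m => poch z m * (z + INR m) end.

Definition bcoef (F x : R -> R) (a : R) (k : nat) : R :=
  sumR k (fun j => let s := S j in
    Derive_n F (k - s)%nat a / INR (Stdlib.Arith.Factorial.fact (k - s)%nat) * (Derive_n x s a / poch (1/2) s)).

Definition btilde (F x : R -> R) (n : nat) (a : R) (k : nat) : R :=
  sumR k (fun j => let s := S j in
    Rbinomial (n - s)%nat (k - s)%nat * (- a) ^ (k - s)%nat * bcoef F x a (n - s + 1)%nat).

(* Main.v *)
Require Import Defs.
From Stdlib Require Import Reals Lia Lra Factorial.
From Coquelicot Require Import Coquelicot.
Open Scope R_scope.

Lemma sumR_ext n f g : (forall i, (i < n)%nat -> f i = g i) -> sumR n f = sumR n g.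
Proof. induction n; simpl; intros H; auto. rewrite IHn by (intros; apply H; lia). rewrite H by lia. auto. Qed.

Lemma sumR_plus n f g : sumR n (fun i => f i + g i) = sumR n f + sumR n g.
Proof. induction n; simpl; [lra|]. rewrite IHn; lra. Qed.

Lemma sumR_scal n c f : sumR n (fun i => c * f i) = c * sumR n f.
Proof. induction n; simpl; [lra|]. rewrite IHn; lra. Qed.

Lemma sumR_zero n f : (forall i, (i < n)%nat -> f i = 0) -> sumR n f = 0.
Proof. induction n; simpl; intros H; auto. rewrite IHn by (intros; apply H; lia). rewrite H by lia. lra. Qed.

Lemma sumR_front n f : sumR (S n) f = f O + sumR n (fun i => f (S i)).
Proof. induction n; simpl; [lra|]. simpl in IHn. rewrite IHn. lra. Qed.

Lemma sumR_rev n f : sumR n f = sumR n (fun i => f (n - 1 - i)%nat).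
Proof. induction n; auto. rewrite (sumR_front n (fun i => f (S n - 1 - i)%nat)).
  change (sumR (S n) f) with (sumR n f + f n). rewrite IHn.
  replace (S n - 1 - 0)%nat with n by lia.
  rewrite (sumR_ext n (fun i => f (n - 1 - i)%nat) (fun i => f (S n - 1 - S i)%nat)) by (intros; f_equal; lia).
  lra. Qed.

Lemma sumR_swap n m f : sumR n (fun i => sumR m (fun j => f i j)) = sumR m (fun j => sumR n (fun i => f i j)).
Proof. induction n; simpl. { symmetry; apply sumR_zero; auto. }
  rewrite IHn. rewrite <- sumR_plus. auto. Qed.

Lemma sumR_tri n g : sumR n (fun j => sumR (S j) (fun i => g j i))
  = sumR n (fun i => sumR (n - i) (fun m => g (i + m)%nat i)).
Proof. induction n; auto.
  change (sumR (S n) (fun j => sumR (S j) (fun i => g j i))) with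
    (sumR n (fun j => sumR (S j) (fun i => g j i)) + sumR (S n) (fun i => g n i)).
  rewrite IHn.
  change (sumR (S n) (fun i => sumR (S n - i) (fun m => g (i + m)%nat i))) with
   (sumR n (fun i => sumR (S n - i) (fun m => g (i + m)%nat i)) + sumR (S n - n) (fun m => g (n + m)%nat n)).
  replace (S n - n)%nat with 1%nat by lia.
  replace (sumR 1 (fun m => g (n+m)%nat n)) with (g n n) by (simpl; rewrite Nat.add_0_r; lra).
  rewrite (sumR_ext n (fun i => sumR (S n - i) (fun m => g (i + m)%nat i))
     (fun i => sumR (n - i) (fun m => g (i + m)%nat i) + g n i)).
  2:{ intros i Hi. replace (S n - i)%nat with (S (n - i)) by lia. simpl.
      replace (i + (n - i))%nat with n by lia. auto. }
  rewrite sumR_plus. change (sumR (S n) (fun i => g n i)) with (sumR n (fun i => g n i) + g n n). rewrite Rplus_assoc; reflexivity. Qed.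

Lemma sumR_single N k f : (k < N)%nat -> (forall m, (m < N)%nat -> m <> k -> f m = 0) -> sumR N f = f k.
Proof. induction N; intros Hk H; [lia|]. simpl. destruct (Nat.eq_dec k N).
  - subst. rewrite sumR_zero. lra. intros; apply H; lia.
  - rewrite IHN by (try lia; intros; apply H; lia). rewrite (H N) by lia. lra. Qed.

Lemma sum_f_R0_sumR f n : sum_f_R0 f n = sumR (S n) f.
Proof. induction n. simpl; lra. simpl sum_f_R0. rewrite IHn. reflexivity. Qed.


Definition btil (b : nat -> R) (n : nat) (a : R) (k : nat) : R :=
  sumR k (fun j => let s := S j in
    Rbinomial (n - s)%nat (k - s)%nat * (- a) ^ (k - s)%nat * b (n - s + 1)%nat).

Lemma btilde_btil F x n a k : btilde F x n a k = btil (bcoef F x a) n a k.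
Proof. reflexivity. Qed.

Lemma L1 b n a P Q : sumR n (fun j => b (S j) * P^j * Q^(n - S j))
  = sumR n (fun j => btil b n a (S j) * (P + a*Q)^(n - S j) * Q^j).
Proof.
  unfold btil. symmetry.
  rewrite (sumR_ext n _ (fun j => sumR (S j) (fun i =>
     Rbinomial (n - S i) (S j - S i) * (-a)^(S j - S i) * b (n - S i + 1)%nat *
     ((P + a*Q)^(n - S j) * Q^j)))).
  2:{ intros j Hj. rewrite Rmult_assoc, (Rmult_comm (sumR _ _)), <- sumR_scal.
      apply sumR_ext. intros; simpl; ring. }
  rewrite sumR_tri.
  rewrite (sumR_ext n _ (fun i => b (n - i)%nat * Q^i * P^(n - S i))).
  2:{ intros i Hi. replace (n - i)%nat with (S (n - S i)) by lia.
      set (N := (n - S i)%nat).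
      replace (P^N) with ((-a*Q + (P + a*Q))^N) by (f_equal; ring).
      rewrite binomial. rewrite sum_f_R0_sumR. rewrite <- sumR_scal.
      apply sumR_ext. intros m Hm.
      replace (S (i + m) - S i)%nat with m by lia.
      replace (n - S (i + m))%nat with (N - m)%nat by (unfold N; lia).
      replace (N + 1)%nat with (S N) by lia.
      unfold Rbinomial. rewrite pow_add. rewrite Rpow_mult_distr. ring. }
  symmetry. rewrite sumR_rev. apply sumR_ext. intros i Hi.
  replace (S (n - 1 - i)) with (n - i)%nat by lia.
  replace (n - 1 - i)%nat with (n - S i)%nat by lia.
  replace (n - (n - i))%nat with i by lia. ring.
Qed.

Lemma part1_gen (b : nat -> R) n a Pi Py :
  sumR n (fun j => let k := S j in
                  b k * Pi ^ (2 * k - 1)%nat * Py ^ (2 * (n - k) + 1)%nat)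
  = sumR n (fun j => let k := S j in
                  btil b n a k * (Pi ^ 2 + a * Py ^ 2) ^ (n - k) * Pi * Py ^ (2 * k - 1)%nat).
Proof.
  pose proof (L1 b n a (Pi^2) (Py^2)) as H.
  rewrite (sumR_ext n _ (fun j => Pi * Py * (b (S j) * (Pi^2)^j * (Py^2)^(n - S j)))).
  2:{ intros j Hj. cbv zeta. replace (2 * S j - 1)%nat with (S (2 * j)) by lia.
      replace (2*(n - S j)+1)%nat with (S (2*(n-S j))) by lia.
      change (Pi ^ S (2*j)) with (Pi * Pi^(2*j)).
      change (Py ^ S (2*(n - S j))) with (Py * Py^(2*(n - S j))).
      rewrite <- !pow_mult. ring. }
  rewrite sumR_scal, H, <- sumR_scal. apply sumR_ext. intros j Hj. cbv zeta.
  replace (2 * S j - 1)%nat with (S (2 * j)) by lia.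
  change (Py ^ S (2*j)) with (Py * Py^(2*j)).
  rewrite <- !pow_mult. ring.
Qed.


Definition ff (m k : nat) : R := prodR k (fun j => INR m - INR j).

Lemma ff_zero m k : (m < k)%nat -> ff m k = 0.
Proof. induction k; intros H; [lia|]. unfold ff; simpl. fold (ff m k).
  destruct (Nat.eq_dec m k). subst; ring. rewrite IHk by lia. ring. Qed.

Lemma ff_fact m k : (k <= m)%nat -> ff m k * INR (fact (m - k)) = INR (fact m).
Proof. induction k; intros H. unfold ff; simpl. rewrite Nat.sub_0_r; ring.
  unfold ff; simpl. fold (ff m k). rewrite <- IHk by lia.
  replace (m - k)%nat with (S (m - S k)) by lia. rewrite fact_simpl, mult_INR.
  rewrite S_INR, minus_INR by lia. rewrite S_INR. ring. Qed.

Lemma is_derive_sumR N (f : nat -> R -> R) (f' : nat -> R) t :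
  (forall m, (m < N)%nat -> is_derive (f m) t (f' m)) ->
  is_derive (fun y => sumR N (fun m => f m y)) t (sumR N f').
Proof. induction N; intros H; simpl. apply (@is_derive_const R_AbsRing R_NormedModule).
  apply (is_derive_plus (fun y => sumR N (fun m => f m y)) (f N)).
  apply IHN; intros; apply H; lia. apply H; lia. Qed.

Lemma is_derive_mono c a p t : is_derive (fun y => c * (y - a)^p) t (c * (INR p * (t - a)^(pred p))).
Proof. auto_derive; auto. rewrite Rmult_1_l. reflexivity. Qed.

Lemma Dn_poly k N e a t : Derive_n (fun t => sumR N (fun m => e m * (t-a)^m)) k t
  = sumR N (fun m => e m * ff m k * (t-a)^(m-k)).
Proof. revert t. induction k; intros t.
  - simpl. apply sumR_ext; intros. unfold ff; simpl. rewrite Nat.sub_0_r; ring.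
  - simpl. rewrite (Derive_ext _ _ t IHk).
    assert (Hd := is_derive_sumR N (fun m y => (e m * ff m k) * (y - a)^(m-k))
       (fun m => (e m * ff m k) * (INR (m-k) * (t-a)^(pred (m-k)))) t
       (fun m _ => is_derive_mono _ _ _ t)).
    transitivity (sumR N (fun m => e m * ff m k * (INR (m - k) * (t - a) ^ Init.Nat.pred (m - k)))).
    { apply is_derive_unique. exact Hd. }
    apply sumR_ext. intros m Hm.
    destruct (Compare_dec.le_lt_dec k m) as [Hkm|Hkm].
    + unfold ff at 2; simpl; fold (ff m k).
      rewrite minus_INR by lia. replace (pred (m - k)) with (m - S k)%nat by lia. ring.
    + rewrite !ff_zero by lia. ring.
Qed.

Lemma coef_extract k N e a : (k < N)%nat ->
  Derive_n (fun t => sumR N (fun m => e m * (t-a)^m)) k a = INR (fact k) * e k.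
Proof. intros Hk. rewrite Dn_poly. rewrite (sumR_single N k); auto.
  2:{ intros m Hm Hmk.
    destruct (Compare_dec.le_lt_dec k m); [rewrite Rminus_diag, pow_i by lia; ring | rewrite ff_zero by lia; ring]. }
  rewrite Nat.sub_diag. pose proof (ff_fact k k (le_n k)) as H. rewrite Nat.sub_diag in H.
  simpl in H. simpl. rewrite <- H. ring. Qed.

Lemma coef_unique N e1 e2 : (forall u, sumR N (fun m => e1 m * u^m) = sumR N (fun m => e2 m * u^m)) ->
  forall k, (k < N)%nat -> e1 k = e2 k.
Proof. intros H k Hk.
  pose proof (coef_extract k N e1 0 Hk) as H1. pose proof (coef_extract k N e2 0 Hk) as H2.
  assert (Derive_n (fun t => sumR N (fun m => e1 m * (t-0)^m)) k 0 =
          Derive_n (fun t => sumR N (fun m => e2 m * (t-0)^m)) k 0).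
  { apply Derive_n_ext. intros t. rewrite Rminus_0_r. apply H. }
  rewrite H1, H2 in H0. apply Rmult_eq_reg_l in H0; auto. apply INR_fact_neq_0. Qed.


Definition g (xi ep ai : R) (s : nat) (t : R) := xi * ((-1)^s * ep^s * poch (1/2) s) / (sqrt (ep * (t - ai)) * (ep * (t - ai))^s).

Lemma gder xi ep ai s t : ep * (t - ai) > 0 -> is_derive (g xi ep ai s) t (g xi ep ai (S s) t).
Proof. intros H. unfold g. auto_derive.
  { unfold Rminus in H. split; [lra|]. split; auto. apply Rmult_integral_contrapositive_currified.
    apply Rgt_not_eq, sqrt_lt_R0; lra. apply pow_nonzero; lra. }
  unfold Rminus in *. set (D := ep * (t + - ai)) in *.
  assert (Hq : 0 < sqrt D) by (apply sqrt_lt_R0; lra).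
  assert (HD : D = sqrt D * sqrt D) by (rewrite sqrt_sqrt; lra).
  set (q := sqrt D) in *. clearbody q. rewrite HD. clear HD H.
  simpl poch. simpl pow at 3 4 5.
  destruct s as [|s].
  - simpl. field. lra.
  - simpl Init.Nat.pred. rewrite S_INR. simpl pow. field. split; [apply pow_nonzero, Rmult_integral_contrapositive_currified|]; lra.
Qed.

Lemma locally_all n t (P : nat -> R -> Prop) : (forall i, (i<n)%nat -> locally t (P i)) ->
  locally t (fun y => forall i, (i<n)%nat -> P i y).
Proof. induction n; intros H.
 - apply filter_forall. intros; lia.
 - eapply filter_imp. 2: apply filter_and; [apply IHn; intros; apply H; lia | apply (H n); lia].
   intros y [H1 H2] i Hi. destruct (Nat.eq_dec i n). subst; auto. apply H1; lia.
Qed.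

Lemma locally_pos ep ai t : ep * (t - ai) > 0 -> (ep = 1 \/ ep = -1) -> locally t (fun y => ep * (y - ai) > 0).
Proof. intros H He. exists (mkposreal _ H). intros y Hy. change (Rabs (y - t) < ep * (t - ai)) in Hy.
  apply Rabs_def2 in Hy. destruct He; subst; lra. Qed.

Lemma Dx_sum n ai eps xi : (forall i, (i<n)%nat -> eps i = 1 \/ eps i = -1) ->
  forall s t, (forall i, (i<n)%nat -> eps i * (t - ai i) > 0) ->
  Derive_n (fun t => sumR n (fun i => xi i / sqrt (eps i * (t - ai i)))) s t
  = sumR n (fun i => g (xi i) (eps i) (ai i) s t).
Proof. intros He s. induction s; intros t Ht.
 - simpl. apply sumR_ext. intros i Hi. unfold g. simpl. field. apply Rgt_not_eq, sqrt_lt_R0. apply Ht; auto.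
 - simpl.
   rewrite (Derive_ext_loc _ (fun y => sumR n (fun i => g (xi i) (eps i) (ai i) s y))).
   + apply is_derive_unique.
     apply (is_derive_sumR n (fun i y => g (xi i) (eps i) (ai i) s y) (fun i => g (xi i) (eps i) (ai i) (S s) t)).
     intros i Hi. apply gder. apply Ht; auto.
   + eapply filter_imp. 2: apply (locally_all n t (fun i y => eps i * (y - ai i) > 0)); intros; apply locally_pos; auto.
     intros y Hy. apply IHs. auto.
Qed.


Lemma prodR_ext n f g : (forall i, (i < n)%nat -> f i = g i) -> prodR n f = prodR n g.
Proof. induction n; simpl; intros H; auto. rewrite IHn by (intros; apply H; lia). rewrite H by lia. auto. Qed.

Lemma prodR_zero n f i : (i<n)%nat -> f i = 0 -> prodR n f = 0.
Proof. induction n; intros Hi H; [lia|]. simpl. destruct (Nat.eq_dec i n).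
  subst. rewrite H; ring. rewrite IHn by (auto; lia). ring. Qed.

Lemma prodR_pick n f i : (i<n)%nat -> f i * prodR n (fun l => if Nat.eqb l i then 1 else f l) = prodR n f.
Proof. induction n; intros Hi; [lia|]. simpl. destruct (Nat.eqb_spec n i).
  - subst. rewrite (prodR_ext i (fun l => if Nat.eqb l i then 1 else f l) f). ring.
    intros l Hl. destruct (Nat.eqb_spec l i); [lia|auto].
  - rewrite <- IHn by lia. ring. Qed.

Lemma F_taylor n ai a : exists e : nat -> R, (forall m, (n < m)%nat -> e m = 0) /\ e n = 1 /\
  forall t, prodR n (fun i => t - ai i) = sumR (S n) (fun m => e m * (t - a)^m).
Proof. induction n.
 - exists (fun m => if Nat.eqb m 0 then 1 else 0). split; [intros m Hm; destruct m; [lia|reflexivity]|].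
   split; [reflexivity|]. intros t; simpl; ring.
 - destruct IHn as [e [He1 [He2 He3]]].
   exists (fun m => (match m with O => 0 | S m' => e m' end) + (a - ai n) * e m).
   split. { intros m Hm. destruct m; [lia|]. rewrite !He1 by lia. ring. }
   split. { rewrite He2, (He1 (S n)) by lia. ring. }
   intros t. change (prodR (S n) (fun i => t - ai i)) with (prodR n (fun i => t - ai i) * (t - ai n)).
   rewrite He3.
   rewrite (sumR_ext (S (S n)) _ (fun m => (match m with O => 0 | S m' => e m' end) * (t-a)^m
        + (a - ai n) * (e m * (t-a)^m))) by (intros; ring).
   rewrite sumR_plus, sumR_scal.
   rewrite (sumR_front (S n) (fun m => (match m with O => 0 | S m' => e m' end) * (t-a)^m)).
   assert (Hs : sumR (S n) (fun i => (match S i with O => 0 | S m' => e m' end) * (t-a)^(S i))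
      = (t - a) * sumR (S n) (fun m => e m * (t-a)^m)).
   { rewrite <- sumR_scal. apply sumR_ext. intros; simpl pow; ring. }
   rewrite Hs.
   change (sumR (S (S n)) (fun m => e m * (t-a)^m)) with
     (sumR (S n) (fun m => e m * (t-a)^m) + e (S n) * (t-a)^(S n)).
   rewrite (He1 (S n)) by lia. ring.
Qed.

Definition beta (e : nat -> R) (r : R) (j : nat) := sumR j (fun l => e (j - S l)%nat * r ^ (S l)).

Lemma beta_S e r N : beta e r (S N) = r * (e N + beta e r N).
Proof. unfold beta. rewrite sumR_front. replace (S N - 1)%nat with N by lia.
  rewrite Rmult_plus_distr_l, <- sumR_scal. f_equal. ring. apply sumR_ext. intros; simpl; ring. Qed.

Lemma beta_id e d h N : d <> 0 -> (d + h) * sumR N (fun j => beta e (-1/d) (S j) * h^j)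
   = - sumR N (fun m => e m * h^m) + beta e (-1/d) N * h^N.
Proof. intros Hd. induction N. { simpl. unfold beta; simpl; ring. }
  change (sumR (S N) (fun j => beta e (-1/d) (S j) * h^j)) with
    (sumR N (fun j => beta e (-1/d) (S j) * h^j) + beta e (-1/d) (S N) * h^N).
  change (sumR (S N) (fun m => e m * h^m)) with (sumR N (fun m => e m * h^m) + e N * h^N).
  rewrite Rmult_plus_distr_l, IHN, beta_S. simpl pow. field. auto. Qed.

Lemma cancel_cont (L R : R -> R) c : (forall u, continuous L u) -> (forall u, continuous R u) ->
  (forall u, (u - c) * L u = (u - c) * R u) -> forall u, L u = R u.
Proof. intros HL HR H u. destruct (Req_dec u c) as [->|Hu].
 2: { apply Rmult_eq_reg_l with (u - c); auto. lra. }
 assert (H1 : is_lim L c (L c)) by (apply is_lim_continuity; apply continuity_pt_filterlim; apply HL).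
 assert (H2 : is_lim R c (R c)) by (apply is_lim_continuity; apply continuity_pt_filterlim; apply HR).
 assert (H3 : is_lim R c (L c)).
 { apply is_lim_ext_loc with L; auto. exists (mkposreal 1 Rlt_0_1). intros y _ Hy.
   apply Rmult_eq_reg_l with (y - c); auto. lra. }
 apply is_lim_unique in H2. apply is_lim_unique in H3. rewrite H2 in H3. injection H3; auto.
Qed.

Lemma cont_sumR N (f : nat -> R -> R) u : (forall m, (m<N)%nat -> continuous (f m) u) ->
  continuous (fun y => sumR N (fun m => f m y)) u.
Proof. induction N; intros H; simpl. apply continuous_const.
  apply (continuous_plus (fun y => sumR N (fun m => f m y)) (f N)); [apply IHN; intros; apply H; lia | apply H; lia]. Qed.

Lemma cont_prodR N (f : nat -> R -> R) u : (forall m, (m<N)%nat -> continuous (f m) u) ->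
  continuous (fun y => prodR N (fun m => f m y)) u.
Proof. induction N; intros H; simpl. apply continuous_const.
  apply (continuous_mult (fun y => prodR N (fun m => f m y)) (f N)); [apply IHN; intros; apply H; lia | apply H; lia]. Qed.


Lemma sumR_S n f : sumR (S n) f = sumR n f + f n.
Proof. reflexivity. Qed.

Lemma poch_pos s : 0 < poch (1/2) s.
Proof. induction s; simpl. lra. apply Rmult_lt_0_compat; auto. pose proof (pos_INR s). lra. Qed.

Lemma part2 : forall (n : nat) (ai eps xi : nat -> R) (sigma : nat -> nat -> R),
      (2 <= n)%nat ->
      (forall i j : nat, (i < n)%nat -> (j < n)%nat -> i <> j -> ai i <> ai j) ->
      (forall i : nat, (i < n)%nat -> eps i = 1 \/ eps i = -1) ->
      (forall i : nat, (i < n)%nat -> forall t : R,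
          prodR n (fun l => if Nat.eqb l i then 1 else t - ai l)
          = sumR n (fun m => (-1) ^ m * sigma i m * t ^ (n - 1 - m)%nat)) ->
      forall a : R, (forall i : nat, (i < n)%nat -> eps i * (a - ai i) > 0) ->
        let F := fun t => prodR n (fun i => t - ai i) in
        let x := fun t => sumR n (fun i => xi i / sqrt (eps i * (t - ai i))) in
        forall k : nat, (1 <= k <= n)%nat ->
          btilde F x n a k
          = (-1) ^ k * sumR n (fun i => xi i / sqrt (eps i * (a - ai i)) * sigma i (k - 1)%nat).
Proof.
  intros n ai eps xi sigma Hn Hdist Heps Hsig a Hpos F x k Hk.
  destruct (F_taylor n ai a) as [e [He1 [He2 He3]]].
  assert (Hd : forall i, (i<n)%nat -> a - ai i <> 0).
  { intros i Hi. specialize (Hpos i Hi). intro H0. rewrite H0 in Hpos. lra. }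
  assert (HA : forall m, (m <= n)%nat -> Derive_n F m a / INR (fact m) = e m).
  { intros m Hm. unfold F. rewrite (Derive_n_ext _ (fun t => sumR (S n) (fun m => e m * (t-a)^m))) by apply He3.
    rewrite coef_extract by lia. field. apply INR_fact_neq_0. }
  assert (HB : forall s, Derive_n x s a / poch (1/2) s
     = sumR n (fun i => xi i / sqrt (eps i * (a - ai i)) * (-1 / (a - ai i)) ^ s)).
  { intros s. unfold x. rewrite (Dx_sum n ai eps xi Heps s a) by auto.
    unfold Rdiv at 1. rewrite Rmult_comm, <- sumR_scal. apply sumR_ext. intros i Hi.
    unfold g. pose proof (poch_pos s). pose proof (Hpos i Hi). pose proof (Hd i Hi).
    assert (0 < sqrt (eps i * (a - ai i))) by (apply sqrt_lt_R0; lra).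
    set (q := sqrt (eps i * (a - ai i))) in *. clearbody q.
    unfold Rdiv. rewrite !Rpow_mult_distr, pow_inv.
    destruct (Heps i Hi) as [He|He]; rewrite He in *.
    - field. repeat split; try lra; apply pow_nonzero; lra.
    - field. repeat split; try lra; apply pow_nonzero; lra. }
  assert (HC : forall j, (j <= n)%nat -> bcoef F x a j
     = sumR n (fun i => xi i / sqrt (eps i * (a - ai i)) * beta e (-1 / (a - ai i)) j)).
  { intros j Hj. unfold bcoef, beta.
    rewrite (sumR_ext j _ (fun l => sumR n (fun i => xi i / sqrt (eps i * (a - ai i)) *
          (e (j - S l)%nat * (-1 / (a - ai i)) ^ (S l))))).
    2:{ intros l Hl. cbv beta zeta. rewrite HA by lia. rewrite HB. rewrite <- sumR_scal.
        apply sumR_ext; intros; ring. }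
    rewrite sumR_swap. apply sumR_ext. intros i Hi. rewrite <- sumR_scal. auto. }
  assert (HD : forall i, (i<n)%nat -> forall u,
     sumR n (fun j => beta e (-1 / (a - ai i)) (S j) * (u - a)^j)
     = - prodR n (fun l => if Nat.eqb l i then 1 else u - ai l)).
  { intros i Hi.
    assert (Hbn : beta e (-1 / (a - ai i)) n = -1).
    { pose proof (beta_id e (a - ai i) (-(a - ai i)) n (Hd i Hi)) as H1.
      rewrite Rplus_opp_r, Rmult_0_l in H1.
      pose proof (He3 (ai i)) as H2. rewrite (prodR_zero n _ i Hi) in H2 by ring.
      replace (ai i - a) with (-(a - ai i)) in H2 by ring.
      rewrite sumR_S, He2 in H2.
      assert (HX : (-(a - ai i))^n <> 0) by (apply pow_nonzero; apply Ropp_neq_0_compat; auto).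
      apply Rmult_eq_reg_r with ((-(a - ai i))^n); auto. lra. }
    intros u. apply (cancel_cont (fun u => sumR n (fun j => beta e (-1 / (a - ai i)) (S j) * (u - a)^j))
       (fun u => - prodR n (fun l => if Nat.eqb l i then 1 else u - ai l)) (ai i)).
    - intros v. apply (cont_sumR n (fun j u => beta e (-1 / (a - ai i)) (S j) * (u - a)^j)).
      intros m Hm. apply (@ex_derive_continuous R_AbsRing R_NormedModule). auto_derive. auto.
    - intros v. apply (continuous_opp (fun u => prodR n (fun l => if Nat.eqb l i then 1 else u - ai l))).
      apply (cont_prodR n (fun l u => if Nat.eqb l i then 1 else u - ai l)).
      intros m Hm. destruct (Nat.eqb m i). apply continuous_const.
      apply (@ex_derive_continuous R_AbsRing R_NormedModule). auto_derive. auto.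
    - intros v. cbv beta.
      transitivity (- prodR n (fun l => v - ai l)).
      + replace (v - ai i) with ((a - ai i) + (v - a)) by ring. rewrite beta_id by auto. rewrite Hbn.
        rewrite He3, sumR_S, He2. ring.
      + rewrite <- (prodR_pick n (fun l => v - ai l) i Hi). ring. }
  assert (HE : forall u, sumR n (fun j => btilde F x n a (S j) * u^(n - S j))
      = sumR n (fun j => bcoef F x a (S j) * (u - a)^j)).
  { intros u. pose proof (L1 (bcoef F x a) n a (u - a) 1) as H.
    rewrite (sumR_ext n (fun j => btilde F x n a (S j) * u^(n - S j))
       (fun j => btil (bcoef F x a) n a (S j) * (u - a + a*1)^(n - S j) * 1^j)).
    2:{ intros j Hj. rewrite pow1. replace (u - a + a*1) with u by ring. rewrite btilde_btil. ring. }
    rewrite <- H. apply sumR_ext. intros j Hj. rewrite pow1. ring. }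
  assert (HF : forall u, sumR n (fun j => btilde F x n a (S j) * u^(n - S j))
     = sumR n (fun m => - sumR n (fun i => xi i / sqrt (eps i * (a - ai i)) * ((-1)^m * sigma i m)) * u^(n-1-m))).
  { intros u. rewrite HE.
    rewrite (sumR_ext n (fun j => bcoef F x a (S j) * (u - a)^j)
       (fun j => sumR n (fun i => (u - a)^j * (xi i / sqrt (eps i * (a - ai i)) * beta e (-1 / (a - ai i)) (S j))))).
    2:{ intros j Hj. rewrite HC by lia. rewrite sumR_scal. ring. }
    rewrite (sumR_ext n (fun m => - sumR n (fun i => xi i / sqrt (eps i * (a - ai i)) * ((-1)^m * sigma i m)) * u^(n-1-m))
       (fun m => sumR n (fun i => (- u^(n-1-m)) * (xi i / sqrt (eps i * (a - ai i)) * ((-1)^m * sigma i m))))).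
    2:{ intros j Hj. rewrite sumR_scal. ring. }
    rewrite sumR_swap. symmetry. rewrite sumR_swap. symmetry. apply sumR_ext. intros i Hi.
    transitivity (xi i / sqrt (eps i * (a - ai i)) * sumR n (fun j => beta e (-1 / (a - ai i)) (S j) * (u - a)^j)).
    { rewrite <- sumR_scal. apply sumR_ext. intros; ring. }
    rewrite HD by auto. rewrite Hsig by auto.
    transitivity (- (xi i / sqrt (eps i * (a - ai i))) * sumR n (fun m => (-1) ^ m * sigma i m * u ^ (n - 1 - m))).
    { ring. }
    rewrite <- sumR_scal. apply sumR_ext. intros; ring. }
  assert (HG := coef_unique n (fun m => btilde F x n a (n - m)%nat)
     (fun m => - sumR n (fun i => xi i / sqrt (eps i * (a - ai i)) * ((-1)^(n-1-m) * sigma i (n-1-m)%nat)))).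
  assert (HG2 : btilde F x n a (n - (n - k))%nat
     = - sumR n (fun i => xi i / sqrt (eps i * (a - ai i)) * ((-1)^(n-1-(n-k)) * sigma i (n-1-(n-k))%nat))).
  { apply HG; [|lia]. intros u. pose proof (HF u) as H.
    rewrite sumR_rev in H. rewrite (sumR_rev n (fun m => - sumR n _ * u^(n-1-m))) in H.
    rewrite (sumR_ext n _ (fun m => btilde F x n a (n - m)%nat * u^m)) in H.
    2:{ intros m Hm. replace (S (n - 1 - m)) with (n - m)%nat by lia.
        replace (n - (n - m))%nat with m by lia. auto. }
    rewrite H. apply sumR_ext. intros m Hm. replace (n - 1 - (n - 1 - m))%nat with m by lia. auto. }
  replace (n - (n - k))%nat with k in HG2 by lia.
  replace (n - 1 - (n - k))%nat with (k - 1)%nat in HG2 by lia.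
  rewrite HG2.
  assert (Hk1 : (-1)^k = -1 * (-1)^(k-1)). { destruct k; [lia|]. simpl. rewrite Nat.sub_0_r. ring. }
  rewrite Hk1. rewrite <- sumR_scal.
  rewrite <- (Rmult_1_l (sumR n (fun i => xi i / sqrt (eps i * (a - ai i)) * ((-1) ^ (k - 1) * sigma i (k - 1)%nat)))).
  rewrite Ropp_mult_distr_l, <- sumR_scal. apply sumR_ext. intros; ring.
Qed.

Theorem proposition9 :
  (forall (n : nat) (A : nat -> R) (x : R -> R),
      (2 <= n)%nat -> A n = 1 ->
      (forall (k : nat) (t : R), ex_derive_n x k t) ->
      forall a Pi Py : R,
        let F := fun t => sumR (S n) (fun k => A k * t ^ k) in
        sumR n (fun j => let k := S j in
                  bcoef F x a k * Pi ^ (2 * k - 1)%nat * Py ^ (2 * (n - k) + 1)%nat)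
        = sumR n (fun j => let k := S j in
                  btilde F x n a k * (Pi ^ 2 + a * Py ^ 2) ^ (n - k) * Pi * Py ^ (2 * k - 1)%nat))
  /\
  (forall (n : nat) (ai eps xi : nat -> R) (sigma : nat -> nat -> R),
      (2 <= n)%nat ->
      (forall i j : nat, (i < n)%nat -> (j < n)%nat -> i <> j -> ai i <> ai j) ->
      (forall i : nat, (i < n)%nat -> eps i = 1 \/ eps i = -1) ->
      (forall i : nat, (i < n)%nat -> forall t : R,
          prodR n (fun l => if Nat.eqb l i then 1 else t - ai l)
          = sumR n (fun m => (-1) ^ m * sigma i m * t ^ (n - 1 - m)%nat)) ->
      forall a : R, (forall i : nat, (i < n)%nat -> eps i * (a - ai i) > 0) ->
        let F := fun t => prodR n (fun i => t - ai i) in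
        let x := fun t => sumR n (fun i => xi i / sqrt (eps i * (t - ai i))) in
        forall k : nat, (1 <= k <= n)%nat ->
          btilde F x n a k
          = (-1) ^ k * sumR n (fun i => xi i / sqrt (eps i * (a - ai i)) * sigma i (k - 1)%nat)).
Proof.
  split.
  - intros n A x Hn HA Hx a Pi Py F. exact (part1_gen (bcoef F x a) n a Pi Py).
  - exact part2.
Qed.
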